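(* Let $\mathcal N=\{N_1,\ldots,N_\ell\}$ be a family of $k$-sets satisfying properties (i) and (ii) below with $\ell\ge4$, and fix any run of the decomposition process described in the context, with its stages $0,\ldots,t$, numbers $\ell_0\ge\cdots\ge\ell_t$ and kernel vertices $a_i^{(s)}$. Let $0\le j\le t$, let $1\le i\le \ell_j$, and let $Y\subseteq N_i$ with $|Y|\le j$. Then there exists a $3$-element set $C\subseteq \bigl(N_i\cup\{a_i^{(0)},\ldots,a_i^{(j)}\}\bigr)\setminus Y$ such that $C\cap (V\setminus N_r)\ne\varnothing$ for every $r=1,\ldots,\ell$.
   Context: Setting: $k\ge3$, $\mathcal N=\{N_1,\dots,N_\ell\}$ a family of $k$-subsets, $V=\bigcup N_i$, $n=|V|$, $m=n-k$, satisfying (i) $\bigcap_{i}N_i=\varnothing$ but $\bigcap_{j\ne i}N_j\ne\varnothing$ for all $i$; (ii) every $S\subseteq V$ with $|S|\ge k+1$ contains a $3$-set $T$ not contained in any $N_i$. Assume $\ell\ge4$. Decomposition process: Stage $0$: $\ell_0=\ell$, $\mathcal N^{(0)}=\mathcal N$; for each $i\le\ell_0$ choose $a_i^{(0)}\in\bigcap_{r\ne i}N_r$; kernel $A^{(0)}=\{a_1^{(0)},\dots,a_{\ell_0}^{(0)}\}$. Having defined stages $0,\dots,j$ with $\mathcal N^{(j)}$ consisting of (truncations of) $N_1,\dots,N_{\ell_j}$, $\ell_j\ge4$, and kernels $A^{(0)},\dots,A^{(j)}$, consider the remainder family $R^{(j)}=\{N_r\setminus\bigcup_{s\le j}A^{(s)}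 : 1\le r\le \ell_j\}$, which has empty intersection. If every subfamily of $R^{(j)}$ that is minimal with respect to having empty intersection has only $2$ or $3$ members, stop and set $t=j$. Otherwise choose such a minimal subfamily with at least $4$ members; after reindexing the sets of $\mathcal N$ we may assume it consists of the truncations $N_r^{(j+1)}=N_r\setminus\bigcup_{s\le j}A^{(s)}$, $r=1,\dots,\ell_{j+1}$, with $\ell_{j+1}\ge4$; for each $i\le\ell_{j+1}$ choose $a_i^{(j+1)}\in\bigcap_{r\le\ell_{j+1},r\ne i}N_r^{(j+1)}$ and set $A^{(j+1)}=\{a_1^{(j+1)},\dots,a_{\ell_{j+1}}^{(j+1)}\}$. Thus $\ell=\ell_0\ge\ell_1\ge\dots\ge\ell_t\ge4$, and ''$N_i\in\mathcal N^{(j)}$'' means $i\le\ell_j$. *)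

(* Defs.v *)
From mathcomp Require Import all_boot.
Set Implicit Arguments. Unset Strict Implicit. Unset Printing Implicit Defensive.

Section Defs.
Variables (T : finType) (l : nat).

(* V = union of the family N_1..N_l, indexed by 'I_l *)
Definition union_fam (N : 'I_l -> {set T}) : {set T} := \bigcup_(i < l) N i.

Definition icap (F : 'I_l -> {set T}) (Q : {set 'I_l}) : {set T} :=
  \bigcap_(r in Q) F r.

Definition min_empty_subfam (F : 'I_l -> {set T}) (Q : {set 'I_l}) : Prop :=
  icap F Q = set0 /\ forall i, i \in Q -> icap F (Q :\ i) != set0.

Definition prop_i (N : 'I_l -> {set T}) : Prop :=
  icap N setT = set0 /\ forall i : 'I_l, icap N (setT :\ i) != set0.

Definition prop_ii (k : nat) (N : 'I_l -> {set T}) : Prop :=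
  forall S : {set T}, S \subset union_fam N -> k.+1 <= #|S| ->
    exists C : {set T}, [/\ C \subset S, #|C| = 3 &
                           forall i : 'I_l, ~~ (C \subset N i)].

(* Kernel at stage s: A^(s) = { a_i^(s) : i in P s }, where P s is the index
   set of the sets N_i belonging to N^(s) (i.e. "i <= l_s" after reindexing) *)
Definition kernel (P : nat -> {set 'I_l}) (a : nat -> 'I_l -> T) (s : nat)
  : {set T} := [set a s i | i in P s].

Definition kernels_below (P : nat -> {set 'I_l}) (a : nat -> 'I_l -> T) (j : nat)
  : {set T} := \bigcup_(s < j) kernel P a s.

Definition trunc (N : 'I_l -> {set T}) (P : nat -> {set 'I_l})
  (a : nat -> 'I_l -> T) (j : nat) : 'I_l -> {set T} :=
  fun r => N r :\: kernels_below P a j.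

(* A run of the decomposition process with stages 0..t.
   P j = index set of N^(j) (size l_j); a j i = a_i^(j) for i in P j. *)
Definition decomposition_run (N : 'I_l -> {set T}) (t : nat)
  (P : nat -> {set 'I_l}) (a : nat -> 'I_l -> T) : Prop :=
  [/\ P 0 = setT,
      (forall j i, j <= t -> i \in P j ->
         a j i \in icap (trunc N P a j) (P j :\ i)),
      (* stage j+1 (j < t): P (j+1) is a minimal empty-intersection subfamily
         of the remainder family R^(j), with at least 4 members *)
      (forall j, j < t ->
         [/\ P j.+1 \subset P j,
             min_empty_subfam (trunc N P a j.+1) (P j.+1)
           & 4 <= #|P j.+1| ]) &
      (* stopping rule at stage t: every minimal empty-intersection subfamily
         of R^(t) has 2 or 3 members *)
      (forall Q : {set 'I_l}, Q \subset P t -> min_empty_subfam (trunc N P a t.+1) Q ->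
         #|Q| = 2 \/ #|Q| = 3)].

End Defs.

(* Main.v *)
Require Import Defs.
From mathcomp Require Import all_boot.
From mathcomp Require Import zify.
Set Implicit Arguments.

Lemma Pmono (T : finType) (l : nat) (N : 'I_l -> {set T}) t P (a : nat -> 'I_l -> T) :
  decomposition_run N t P a -> forall s j, s <= j -> j <= t -> P j \subset P s.
Proof.
case=> _ _ H3 _ s j; elim: j => [|j IH] sj jt.
  by have -> : s = 0 by lia.
case: (leqP s j) => h; last by have -> : s = j.+1 by lia.
have [h1 _ _] := H3 j ltac:(lia).
by apply: subset_trans h1 (IH _ _); lia.
Qed.

Lemma empty_at (T : finType) (l : nat) (N : 'I_l -> {set T}) t P (a : nat -> 'I_l -> T) :
  prop_i N -> decomposition_run N t P a -> forall s, s <= t ->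
  icap (trunc N P a s) (P s) = set0.
Proof.
move=> Hpi Hd [|s] st; case: Hpi => Hi _; case: Hd => H0 _ H3 _.
  rewrite H0 -Hi /icap; apply: eq_bigr => r _.
  by rewrite /trunc /kernels_below big_ord0 setD0.
by have [_ M _] := H3 s ltac:(lia); case: M.
Qed.

Lemma Pcard (T : finType) (l : nat) (N : 'I_l -> {set T}) t P (a : nat -> 'I_l -> T) :
  4 <= l -> decomposition_run N t P a -> forall s, s <= t -> 4 <= #|P s|.
Proof.
move=> l4 Hd [|s] st; case: Hd => H0 _ H3 _.
  by rewrite H0 cardsT card_ord.
by have [_ _ ] := H3 s ltac:(lia).
Qed.

Lemma a_props (T : finType) (l : nat) (N : 'I_l -> {set T}) t P (a : nat -> 'I_l -> T) :
  4 <= l -> prop_i N -> decomposition_run N t P a -> forall s i, s <= t -> i \in P s ->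
  [/\ a s i \in union_fam N, a s i \notin N i & a s i \notin kernels_below P a s].
Proof.
move=> l4 Hpi Hd s i st iP.
have [H0 H2 H3 _] := Hd.
have Ha := H2 s i st iP.
have [r rP] : exists r, r \in P s :\ i.
  apply/set0Pn; rewrite -card_gt0.
  have := Pcard l4 Hd s st; rewrite (cardsD1 i) iP; lia.
have /bigcapP Hall := Ha.
have := Hall r rP; rewrite /trunc in_setD => /andP [nK inr].
split => //.
  by apply/bigcupP; exists r.
apply/negP => ain.
have := empty_at Hpi Hd s st; rewrite /icap => E.
have : a s i \in \bigcap_(r0 in P s) trunc N P a s r0.
  apply/bigcapP => r0 r0P.
  case: (eqVneq r0 i) => [->|ne].
    by rewrite /trunc in_setD nK.
  by apply: Hall; rewrite in_setD1 ne.
by rewrite E in_set0.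
Qed.

Lemma a_dist (T : finType) (l : nat) (N : 'I_l -> {set T}) t P (a : nat -> 'I_l -> T) :
  4 <= l -> prop_i N -> decomposition_run N t P a -> forall s1 s2 i, s1 < s2 -> s2 <= t ->
  i \in P s2 -> a s1 i != a s2 i.
Proof.
move=> l4 Hpi Hd s1 s2 i lt st iP.
have [_ _ nK] := a_props l4 Hpi Hd s2 st iP.
have iP1 : i \in P s1 by apply: (subsetP (Pmono Hd s1 s2 _ st)) => //; lia.
apply/eqP => E; move: nK; rewrite -E => /negP; apply.
apply/bigcupP; exists (Ordinal lt) => //=.
by apply/imsetP; exists i.
Qed.

Theorem lemma3 (T : finType) (k l : nat) (N : 'I_l -> {set T})
  (t : nat) (P : nat -> {set 'I_l}) (a : nat -> 'I_l -> T) :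
  3 <= k ->
  4 <= l ->
  (forall i, #|N i| = k) ->
  prop_i N ->
  prop_ii k N ->
  decomposition_run N t P a ->
  forall (j : nat) (i : 'I_l) (Y : {set T}),
    j <= t -> i \in P j -> Y \subset N i -> #|Y| <= j ->
    exists C : {set T},
      [/\ #|C| = 3,
          C \subset (N i :|: [set a (nat_of_ord s) i | s : 'I_j.+1]) :\: Y &
          forall r : 'I_l, C :&: (union_fam N :\: N r) != set0].
Proof.
move=> k3 l4 Nk Hpi Hpii Hd j i Y jt iP YN Yj.
have iPs : forall s, s <= j -> i \in P s.
  by move=> s sj; apply: (subsetP (Pmono Hd s j sj jt)).
set A := [set a (nat_of_ord s) i | s : 'I_j.+1].
have inj : injective (fun s : 'I_j.+1 => a (nat_of_ord s) i).
  move=> x y E; apply/val_inj => /=.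
  have xj : x <= j by have := ltn_ord x; lia.
  have yj : y <= j by have := ltn_ord y; lia.
  have xt : x <= t by lia.
  have yt : y <= t by lia.
  case: (ltngtP (nat_of_ord x) (nat_of_ord y)) => // h.
    by move: (a_dist l4 Hpi Hd _ _ h yt (iPs _ yj)); rewrite /= E eqxx.
  by move: (a_dist l4 Hpi Hd _ _ h xt (iPs _ xj)); rewrite /= E eqxx.
have cA : #|A| = j.+1 by rewrite card_imset // card_ord.
have AV : forall x, x \in A -> x \in union_fam N /\ x \notin N i.
  move=> x /imsetP [s _ ->].
  have sj : s <= j by have := ltn_ord s; lia.
  by have [? ? _] := a_props l4 Hpi Hd s ltac:(lia) (iPs _ sj).
have NA : N i :&: A = set0.
  apply/setP => x; rewrite !inE; apply/negP => /andP [xN xA].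
  by have [_ /negP] := AV x xA.
set S := (N i :|: A) :\: Y.
have SV : S \subset union_fam N.
  apply/subsetP => x; rewrite !inE => /andP [_ /orP [xN|xA]].
    by apply/bigcupP; exists i.
  by case: (AV x xA).
have cS : k.+1 <= #|S|.
  rewrite /S cardsD cardsU NA cards0 Nk cA.
  have -> : (N i :|: A) :&: Y = Y.
    by apply/setIidPr; apply: subset_trans YN (subsetUl _ _).
  lia.
have [C [CS C3 CN]] := Hpii S SV cS.
exists C; split => // r.
have /subsetPn [x xC xN] := CN r.
apply/set0Pn; exists x; rewrite !inE xC xN /=.
by apply: (subsetP SV); apply: (subsetP CS).
Qed.
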